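(* Let $G=(V,E)$ be a finite graph and $G_0=(V,E_0)$ a spanning subgraph with $E_0\subseteq E$. Let $q\in\mathbb N$, $\beta\ge0$, and for a graph $H$ on vertex set $V$ let $P_H$ denote the transition matrix of the Swendsen--Wang dynamics for the $q$-state Potts model on $H$ at inverse temperature $\beta$. Then for all $\sigma,\tau\in\{1,\dots,q\}^V$, \[ a_1^{|E\setminus E_0|}\,P_{G_0}(\sigma,\tau)\;\le\;P_G(\sigma,\tau)\;\le\;a_2^{|E\setminus E_0|}\,P_{G_0}(\sigma,\tau), \] where $a_1=a_1(\beta)=e^{-\beta}$ and $a_2=a_2(\beta,q)=1+q(e^\beta-1)$.
   Context: Graphs are finite, parallel edges and loops allowed. For a graph $H=(V,F)$ and $A\subseteq F$, $c(A)$ is the number of connected components of $(V,A)$; for $\sigma\in\{1,\dots,q\}^V$, $F(\sigma)$ is the set of edges of $H$ whose endvertices have the same color in $\sigma$. With $p=1-e^{-\beta}$, the Swendsen--Wang transition matrix on $H$ is $P_H(\sigma,\tau)=(1-p)^{|F(\sigma)|}\sum_{A\subseteq F(\sigma)\cap F(\tau)}\bigl(\tfrac{p}{1-p}\bigr)^{|A|}q^{-c(A)}$. *)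

(* Defs.v *)
From HB Require Import structures.
From mathcomp Require Import all_boot all_order all_algebra.
From mathcomp Require Import reals.
From mathcomp Require Import sequences exp.
Set Implicit Arguments. Unset Strict Implicit. Unset Printing Implicit Defensive.
Import Order.TTheory GRing.Theory Num.Theory.
Local Open Scope ring_scope.

(* A finite multigraph on vertex type V: edge labels in a finType Ed, each
   edge e having endpoints ep e = (x, y) (loops x = y and parallel edges are
   allowed).  A graph H on V is given by its edge set H : {set Ed}. *)

Definition adjA (V Ed : finType) (ep : Ed -> V * V) (A : {set Ed}) : rel V :=
  fun x y => [exists e in A, (ep e == (x, y)) || (ep e == (y, x))].

Definition ncomp (V Ed : finType) (ep : Ed -> V * V) (A : {set Ed}) : nat :=
  n_comp (connect (adjA ep A)) (@predT V).

Definition monoE (V Ed : finType) (ep : Ed -> V * V) (q : nat)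
  (H : {set Ed}) (sigma : {ffun V -> 'I_q}) : {set Ed} :=
  [set e in H | sigma (ep e).1 == sigma (ep e).2].

Definition SW (R : realType) (V Ed : finType) (ep : Ed -> V * V) (q : nat)
  (beta : R) (H : {set Ed}) (sigma tau : {ffun V -> 'I_q}) : R :=
  let p := 1 - expR (- beta) in
  (1 - p) ^+ #|monoE ep H sigma|
  * \sum_(A : {set Ed} | A \subset monoE ep H sigma :&: monoE ep H tau)
      (p / (1 - p)) ^+ #|A| * (q%:R ^- ncomp ep A).

(* Main.v *)
Require Import Defs.
From HB Require Import structures.
From mathcomp Require Import all_boot all_order all_algebra.
From mathcomp Require Import reals.
From mathcomp Require Import sequences exp.
From mathcomp Require Import ring lra.
Import Order.TTheory GRing.Theory Num.Theory.
Local Open Scope ring_scope.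


Section Comp.
Variables (V Ed : finType) (ep : Ed -> V * V).

Lemma adjA_sym (A : {set Ed}) : symmetric (adjA ep A).
Proof.
move=> x y; rewrite /adjA; apply/existsP/existsP => -[e0 /andP[H1 H2]];
  by exists e0; rewrite H1 orbC.
Qed.

Lemma csym (A : {set Ed}) : connect_sym (adjA ep A).
Proof.
move=> x y; have := connect_rev (adjA ep A) x y; rewrite /= => <-.
by apply: eq_connect => a b /=; rewrite adjA_sym.
Qed.

Lemma connect_mono (A B : {set Ed}) x y : A \subset B ->
  connect (adjA ep A) x y -> connect (adjA ep B) x y.
Proof.
move=> sAB; apply: connect_sub => a b /existsP[e0 /andP[h1 h2]].
by apply: connect1; apply/existsP; exists e0; rewrite h2 (subsetP sAB).
Qed.

Lemma cc (r : rel V) x y : connect (connect r) x y = connect r x y.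
Proof.
apply/idP/idP; last exact: connect1.
exact: (connect_sub (e := connect r) (e' := r) (fun _ _ h => h)).
Qed.

Lemma ncomp_setU1 (A : {set Ed}) e : (ncomp ep A <= (ncomp ep (e |: A)).+1)%N.
Proof.
rewrite /ncomp /n_comp_mem.
set ad := adjA ep A; set ad' := adjA ep (e |: A).
pose c := connect ad; pose c' := connect ad'.
set u := (ep e).1; set v := (ep e).2.
have symc : connect_sym c by move=> x y; rewrite !cc; apply: csym.
have symc' : connect_sym c' by move=> x y; rewrite !cc; apply: csym.
pose K z := c z u || c z v.
have Kc x y : c x y -> K y -> K x.
  move=> cxy /orP[] h; apply/orP; [left|right]; exact: connect_trans cxy h.
have key x y : c' x y -> c x y || (K x && K y).
  move=> /connectP[p pth ->]; elim: p x pth => [|z p IH] x /=.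
    by move=> _; apply/orP; left; exact: connect0.
  case/andP=> axz /IH {IH}; set w := last z p => IH.
  case/existsP: axz => e0 /andP[]; rewrite in_setU1 => /orP[/eqP-> | e0A] hxz.
    have Kx : K x.
      by case/orP: hxz => /eqP he; apply/orP; [left|right]; rewrite /u /v he; exact: connect0.
    have Kz : K z.
      by case/orP: hxz => /eqP he; apply/orP; [right|left]; rewrite /u /v he; exact: connect0.
    apply/orP; right; rewrite Kx /=.
    case/orP: IH => [czw|/andP[]//]; apply: (Kc w z) => //.
    by rewrite /c csym.
  have cxz : c x z by apply: connect1; apply/existsP; exists e0; rewrite e0A.
  case/orP: IH => [czw|/andP[Kz Kw]].
    by apply/orP; left; exact: connect_trans cxz czw.
  by rewrite (Kc x z) // Kw orbT.
have -> : #|predI (roots c) (mem predT)| = #|[set x | roots c x]|.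
  by apply: eq_card => x; rewrite !inE andbT.
have -> : #|predI (roots c') (mem predT)| = #|[set x | roots c' x]|.
  by apply: eq_card => x; rewrite !inE andbT.
set RA := [set x | roots c x]; set RA' := [set x | roots c' x].
rewrite (cardsD1 (fingraph.root c v) RA).
set D := RA :\ fingraph.root c v.
have injh : {in D &, injective (fingraph.root c')}.
  move=> r1 r2; rewrite !inE => /andP[n1 /eqP r1r] /andP[n2 /eqP r2r] h.
  have hc : c' r1 r2.
    by have := introT (fingraph.rootP symc') h; rewrite /c' cc.
  have := key r1 r2 hc.
  case/orP => [/connect1/(fingraph.rootP symc)|/andP[K1 K2]].
    by rewrite r1r r2r.
  have hK r : r != fingraph.root c v -> fingraph.root c r = r -> K r -> r = fingraph.root c u.
    move=> nr rr /orP[] /connect1/(fingraph.rootP symc); rewrite rr // => hr.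
    by rewrite hr eqxx in nr.
  by rewrite (hK r1) // (hK r2).
have : (#|D| <= #|RA'|)%N.
  rewrite -(card_in_imset injh); apply: subset_leq_card.
  by apply/subsetP => y /imsetP[x _ ->]; rewrite inE roots_root.
by case: (_ \in _) => /=; rewrite ?add1n ?add0n // => h; apply: leqW.
Qed.
End Comp.



Section Alg.
Variables (R : realType) (V Ed : finType) (ep : Ed -> V * V) (q : nat) (beta : R).
Hypothesis hb : 0 <= beta.

Let a := expR (- beta).
Let r := (1 - a) / a.
Definition W (A : {set Ed}) := r ^+ #|A| * q%:R ^- ncomp ep A.
Definition Sm (S : {set Ed}) := \sum_(A : {set Ed} | A \subset S) W A.

Lemma a_gt0 : 0 < a. Proof. exact: expR_gt0. Qed.
Lemma a_le1 : a <= 1. Proof. by rewrite /a expR_le1 oppr_le0. Qed.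
Lemma r_ge0 : 0 <= r.
Proof. by rewrite /r divr_ge0 ?subr_ge0 ?a_le1 // ltW // a_gt0. Qed.
Lemma W_ge0 A : 0 <= W A.
Proof. by rewrite /W mulr_ge0 ?exprn_ge0 ?r_ge0 // invr_ge0 exprn_ge0. Qed.
Lemma Sm_ge0 S : 0 <= Sm S.
Proof. by apply: sumr_ge0 => A _; apply: W_ge0. Qed.

Lemma SWE H (sigma tau : {ffun V -> 'I_q}) : SW ep beta H sigma tau =
  a ^+ #|monoE ep H sigma| * Sm (monoE ep H sigma :&: monoE ep H tau).
Proof. by rewrite /SW /= subKr. Qed.

Lemma Sm_mono (S S' : {set Ed}) : S \subset S' -> Sm S <= Sm S'.
Proof.
move=> sS; rewrite /Sm [X in X <= _]big_mkcond [X in _ <= X]big_mkcond.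
apply: ler_sum => A _; case: ifP => h.
  by rewrite (subset_trans h sS) lexx.
by case: ifP => _; rewrite ?lexx ?W_ge0.
Qed.

Lemma Sm_U1 (S : {set Ed}) e : (0 < q)%N -> e \notin S ->
  Sm (e |: S) <= (1 + r * q%:R) * Sm S.
Proof.
move=> q0 eS; rewrite /Sm [X in X <= _](bigID (fun A : {set Ed} => e \in A)) /= addrC mulrDl mul1r.
apply: lerD.
  rewrite le_eqVlt; apply/orP; left; apply/eqP; apply: eq_bigl => A.
  apply/andP/idP => [[sA eA]|sA].
    apply/subsetP => x xA; have := subsetP sA x xA; rewrite in_setU1.
    by case/orP => // /eqP xe; rewrite -xe xA in eA.
  split; first exact: subset_trans sA (subsetU1 _ _).
  by apply/negP => /(subsetP sA); rewrite (negbTE eS).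
rewrite (reindex_onto (fun B => e |: B) (fun A => A :\ e)); last first.
  by move=> A /andP[_ eA]; rewrite setD1K.
rewrite mulr_sumr.
have eqP' : forall B, ((e |: B \subset e |: S) && (e \in e |: B)) && ((e |: B) :\ e == B)
   = (B \subset S).
  move=> B; apply/idP/idP.
    case/andP=> /andP[sB _] /eqP hB; rewrite -hB; apply/subsetP => x.
    rewrite !inE => /andP[xe xB]; have := subsetP sB x; rewrite !inE xB.
    by move=> /(_ isT); rewrite (negbTE xe).
  move=> sB; have eB : e \notin B by apply/negP => /(subsetP sB); rewrite (negbTE eS).
  by rewrite setU1K // eqxx setU11 andbT /= setUS.
rewrite (eq_bigl _ _ eqP'); apply: ler_sum => B sB.
have eB : e \notin B by apply/negP => /(subsetP sB); rewrite (negbTE eS).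
rewrite /W cardsU1 eB add1n exprS.
set Q := q%:R : R.
have Q1 : 1 <= Q by rewrite /Q ler1n.
have Q0 : 0 < Q by apply: lt_le_trans Q1.
set m := ncomp ep (e |: B); set n := ncomp ep B.
have nm : (n <= m.+1)%N by apply: ncomp_setU1.
have hQ : Q ^- m <= Q * Q ^- n.
  have -> : Q ^- m = Q * Q ^- m.+1.
    by rewrite exprS invfM mulrA mulfV ?mul1r // gt_eqF.
  apply: ler_wpM2l; first exact: ltW.
  rewrite lef_pV2 ?posrE ?exprn_gt0 //.
  exact: ler_weXn2l.
have := ler_wpM2l (mulr_ge0 r_ge0 (exprn_ge0 #|B| r_ge0)) hQ.
move=> h; apply: (le_trans h); rewrite le_eqVlt; apply/orP; left; apply/eqP.
ring.
Qed.

End Alg.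



Section Main.
Variables (R : realType) (V Ed : finType) (ep : Ed -> V * V) (q : nat) (beta : R).
Hypothesis hb : 0 <= beta.

Lemma a2_ge1 : 1 <= 1 + q%:R * (expR beta - 1).
Proof.
rewrite lerDl mulr_ge0 // subr_ge0.
by apply: le_trans (expR_ge1Dx beta); rewrite lerDl.
Qed.

Lemma num_ineq : expR (- beta) * (1 + (1 - expR (- beta)) / expR (- beta) * q%:R)
  <= 1 + q%:R * (expR beta - 1).
Proof.
set a := expR (- beta); set b := expR beta; set Q := q%:R : R.
have a0 : 0 < a by apply: expR_gt0.
have -> : a * (1 + (1 - a) / a * Q) = a + (1 - a) * Q.
  by field; rewrite gt_eqF.
have ab : a * b = 1 by rewrite /a /b expRN mulVf // gt_eqF // expR_gt0.
have b1 : 1 <= b by apply: le_trans (expR_ge1Dx beta); rewrite lerDl.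
have a1 : a <= 1 by rewrite /a expR_le1 oppr_le0.
have Q0 : 0 <= Q by [].
have h : 0 <= (b - 1) * (1 - a) by rewrite mulr_ge0 // subr_ge0.
nra.
Qed.

Lemma step (H : {set Ed}) e (sigma tau : {ffun V -> 'I_q}) : (0 < q)%N -> e \notin H ->
  expR (- beta) * SW ep beta H sigma tau <= SW ep beta (e |: H) sigma tau /\
  SW ep beta (e |: H) sigma tau <= (1 + q%:R * (expR beta - 1)) * SW ep beta H sigma tau.
Proof.
move=> q0 eH; rewrite !SWE.
set F := monoE ep H sigma; set G := monoE ep H tau.
set F' := monoE ep (e |: H) sigma; set G' := monoE ep (e |: H) tau.
have a0 : 0 <= expR (- beta) by apply: expR_ge0.
have a1 : expR (- beta) <= 1 by rewrite expR_le1 oppr_le0.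
have eF : e \notin F by rewrite !inE (negbTE eH).
have FF' : F \subset F'.
  by apply/subsetP => x; rewrite !inE => /andP[-> ->]; rewrite orbT.
have GG' : G \subset G'.
  by apply/subsetP => x; rewrite !inE => /andP[-> ->]; rewrite orbT.
have cF' : (#|F'| <= #|F|.+1)%N.
  have : F' \subset e |: F.
    apply/subsetP => x; rewrite !inE => /andP[/orP[->//|xH] ->].
    by rewrite xH orbT.
  by move/subset_leq_card; rewrite cardsU1 eF.
split.
  rewrite mulrA -exprS; apply: ler_pM.
  - exact: exprn_ge0.
  - exact: (Sm_ge0 _ _ _ _ _ _ hb _).
  - exact: ler_wiXn2l.
  - exact/Sm_mono/setISS.
case: (boolP ((sigma (ep e).1 == sigma (ep e).2) && (tau (ep e).1 == tau (ep e).2))).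
  case/andP => ms mt.
  have eF' : F' = e |: F.
    apply/setP => x; rewrite !inE; case: (eqVneq x e) => [->|] //=.
  have eS : F' :&: G' = e |: (F :&: G).
    apply/setP => x; rewrite !inE; case: (eqVneq x e) => [->|] //=.
    by rewrite ms mt.
  have eS0 : e \notin F :&: G by rewrite inE (negbTE eF).
  rewrite eS eF' cardsU1 eF add1n exprS.
  apply: (le_trans (ler_wpM2l (mulr_ge0 a0 (exprn_ge0 _ a0)) (@Sm_U1 R V Ed ep q beta hb _ _ q0 eS0))) => //.
  set s := Sm _ _ _ _ _ _ _; set k := #|F|.
  set A := expR (- beta).
  have -> : A * A ^+ k * ((1 + (1 - A) / A * q%:R) * s) =
    (A * (1 + (1 - A) / A * q%:R)) * (A ^+ k * s) by ring.
  apply: ler_wpM2r; first by rewrite mulr_ge0 ?exprn_ge0 ?(Sm_ge0 _ _ _ _ _ _ hb _).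
  exact: num_ineq.
move=> nm.
have eS : F' :&: G' = F :&: G.
  apply/setP => x; rewrite !inE; case: (eqVneq x e) => [->|] //=.
  rewrite (negbTE eH) /=.
  by case: (sigma _ == _) nm; case: (tau _ == _).
rewrite eS.
have hF : (#|F| <= #|F'|)%N by apply: subset_leq_card.
apply: (le_trans (ler_wpM2r (Sm_ge0 _ _ _ _ _ _ hb _) (ler_wiXn2l a0 a1 hF))).
rewrite ler_peMl //; first by rewrite mulr_ge0 ?exprn_ge0 ?(Sm_ge0 _ _ _ _ _ _ hb _).
exact: a2_ge1.
Qed.
End Main.


Theorem lemma3p7 (R : realType) (V Ed : finType) (ep : Ed -> V * V)
  (E E0 : {set Ed}) (q : nat) (beta : R) :
  E0 \subset E -> 0 <= beta ->
  forall sigma tau : {ffun V -> 'I_q},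
    expR (- beta) ^+ #|E :\: E0| * SW ep beta E0 sigma tau
      <= SW ep beta E sigma tau
    /\ SW ep beta E sigma tau
      <= (1 + q%:R * (expR beta - 1)) ^+ #|E :\: E0| * SW ep beta E0 sigma tau.
Proof.
move=> sE hb sigma tau.
have a0 : 0 <= expR (- beta) by apply: expR_ge0.
have a20 : 0 <= 1 + q%:R * (expR beta - 1).
  exact: le_trans ler01 (@a2_ge1 R q beta hb).
have SW0 (H : {set Ed}) : 0 <= SW ep beta H sigma tau.
  by rewrite SWE mulr_ge0 ?exprn_ge0 ?(Sm_ge0 _ _ _ _ _ _ hb _).
move: {2}#|E :\: E0| (erefl #|E :\: E0|) => n.
elim: n E sE => [|n IH] E sE hn.
  have : E :\: E0 == set0 by rewrite -cards_eq0 hn.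
  rewrite setD_eq0 => sE'.
  rewrite hn !expr0 !mul1r.
  have -> : E = E0 by apply/eqP; rewrite eqEsubset sE' sE.
  by split; exact: lexx.
have [e eE] : exists e, e \in E :\: E0.
  by apply/set0Pn; rewrite -card_gt0 hn.
have q0 : (0 < q)%N by apply: leq_ltn_trans (ltn_ord (sigma (ep e).1)).
set E1 := E :\ e.
have eE1 : e \notin E1 by rewrite !inE eqxx.
have defE : E = e |: E1 by rewrite setD1K //; move: eE; rewrite inE => /andP[].
have sE1 : E0 \subset E1.
  apply/subsetP => x x0; rewrite !inE (subsetP sE _ x0) andbT.
  by apply/eqP => xe; move: eE; rewrite inE -xe x0.
have hn1 : #|E1 :\: E0| = n.
  have -> : E1 :\: E0 = (E :\: E0) :\ e.
    by apply/setP => x; rewrite !inE andbCA.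
  by move: hn; rewrite (cardsD1 e) eE add1n => -[].
have [l1 u1] := IH E1 sE1 hn1.
have [l2 u2] := @step R V Ed ep q beta hb E1 e sigma tau q0 eE1.
rewrite -defE in l2 u2; rewrite hn1 in l1 u1.
rewrite hn; split.
  apply: le_trans l2; rewrite exprS -mulrA. by apply: ler_wpM2l.
apply: (le_trans u2); rewrite exprS -mulrA; by apply: ler_wpM2l.
Qed.
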